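(* Let $\mathcal M=\langle M,<,+,\dots\rangle$ be a linear o-minimal expansion of an ordered group. Let $a<b$, $c<d$ in $M$ and let $h:[a,b]\times[c,d]\to M$ be an $\mathcal L$-definable continuous function such that for every $t\in(a,b)$, the map $h(t,-):[c,d]\to M$ is strictly increasing. Then $h(b,d)-h(b,c)>0$.
   Context: $\mathcal L$-definable means definable in $\mathcal M$ with parameters. A function $f:B\subseteq M^n\to M$ is affine if $f(x+t)-f(x)=f(y+t)-f(y)$ whenever $x,y,x+t,y+t\in B$; $\mathcal M$ is linear if every definable $f:B\subseteq M^n\to M$ is affine on each piece of some finite partition of $B$ into definable sets. *)

(* Defs.v *)
(* Definable sets (with
   parameters) of an expansion of <M,<,+> are modelled, following
   van den Dries ("Tame topology and o-minimal structures", Ch. 1), as a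
   "structure" on M: for each n a family S n of subsets of M^n.
   Points of M^n are sequences of length n. *)
From Stdlib Require Import List.
From HB Require Import structures.
From mathcomp Require Import all_boot all_order all_algebra.
Set Implicit Arguments. Unset Strict Implicit. Unset Printing Implicit Defensive.
Import GRing.Theory.
Local Open Scope ring_scope.

Section Defs.
Variable M : zmodType.
Variable lt : M -> M -> Prop.

Definition le (x y : M) : Prop := lt x y \/ x = y.

Definition ordered_group : Prop :=
  [/\ (forall x, ~ lt x x),
      (forall x y z, lt x y -> lt y z -> lt x z),
      (forall x y, lt x y \/ x = y \/ lt y x) &
      (forall x y z, lt x y -> lt (x + z) (y + z))].

Definition set_of_dim (n : nat) (A : seq M -> Prop) : Prop :=
  forall s, A s -> size s = n.

Definition is_structure (S : nat -> (seq M -> Prop) -> Prop) : Prop :=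
  [/\
      (forall n A, S n A -> set_of_dim n A),
      [/\ (forall n, S n (fun _ => False)),
          (forall n A B, S n A -> S n B -> S n (fun s => A s \/ B s)) &
          (forall n A, S n A -> S n (fun s => size s = n /\ ~ A s))],
      [/\ (forall n A, S n A -> S n.+1 (fun s => size s = n.+1 /\ A (take n s))),
          (forall n A, S n A -> S n.+1 (fun s => size s = n.+1 /\ A (behead s))),
          (forall n i j, (i < n)%N -> (j < n)%N ->
             S n (fun s => size s = n /\ nth 0 s i = nth 0 s j)) &
          (forall n A, S n.+1 A -> S n (fun s => exists z, A (rcons s z)))] &
      [/\ S 2 (fun s => exists x y, s = [:: x; y] /\ lt x y),
          S 3 (fun s => exists x y, s = [:: x; y; x + y]) &
          (forall a, S 1 (fun s => s = [:: a]))]].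

(* Open interval with endpoints in M ∪ {-oo, +oo} (None = infinite). *)
Definition in_interval (iv : option M * option M) (x : M) : Prop :=
  (match iv.1 with Some u => lt u x | None => True end) /\
  (match iv.2 with Some v => lt x v | None => True end).

Definition o_minimal (S : nat -> (seq M -> Prop) -> Prop) : Prop :=
  forall A, S 1 A ->
    exists (pts : seq M) (ivs : seq (option M * option M)),
      forall x, A [:: x] <-> (List.In x pts \/ exists iv, List.In iv ivs /\ in_interval iv x).

Definition addv (s t : seq M) : seq M := [seq p.1 + p.2 | p <- zip s t].

Definition affine_on (B : seq M -> Prop) (f : seq M -> M) : Prop :=
  forall x y t, B x -> B y -> B (addv x t) -> B (addv y t) ->
    f (addv x t) - f x = f (addv y t) - f y.

Definition graph (B : seq M -> Prop) (f : seq M -> M) : seq M -> Prop :=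
  fun s => exists x, B x /\ s = rcons x (f x).

Definition definable_fun (S : nat -> (seq M -> Prop) -> Prop) (n : nat)
  (B : seq M -> Prop) (f : seq M -> M) : Prop :=
  S n B /\ S n.+1 (graph B f).

Definition linear_structure (S : nat -> (seq M -> Prop) -> Prop) : Prop :=
  forall n B f, definable_fun S n B f ->
    exists Bs : seq (seq M -> Prop),
      [/\ (forall C, List.In C Bs -> S n C),
          (forall x, B x <-> exists C, List.In C Bs /\ C x),
          (forall i j x, (i < size Bs)%N -> (j < size Bs)%N -> i <> j ->
              nth (fun _ => False) Bs i x -> nth (fun _ => False) Bs j x -> False) &
          (forall C, List.In C Bs -> affine_on C f)].

Definition in_box (a b c d x y : M) : Prop :=
  le a x /\ le x b /\ le c y /\ le y d.

Definition definable_on_box (S : nat -> (seq M -> Prop) -> Prop)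
  (a b c d : M) (h : M -> M -> M) : Prop :=
  S 3 (fun s => exists x y, s = [:: x; y; h x y] /\ in_box a b c d x y).

Definition continuous_on_box (a b c d : M) (h : M -> M -> M) : Prop :=
  forall x0 y0, in_box a b c d x0 y0 ->
    forall u v, lt u (h x0 y0) -> lt (h x0 y0) v ->
      exists u1 v1 u2 v2, [/\ lt u1 x0, lt x0 v1, lt u2 y0, lt y0 v2 &
        forall x y, in_box a b c d x y -> lt u1 x -> lt x v1 -> lt u2 y -> lt y v2 ->
          lt u (h x y) /\ lt (h x y) v].
End Defs.

(* Main.v *)
Require Import Defs.
From Stdlib Require Import List Classical ClassicalEpsilon FunctionalExtensionality PropExtensionality.
From HB Require Import structures.
From mathcomp Require Import all_boot all_order all_algebra.
Import GRing.Theory.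
Local Open Scope ring_scope.
Set Implicit Arguments. Unset Strict Implicit.

Lemma og_irr (M : zmodType) (lt : M -> M -> Prop) (H : ordered_group lt) x : ~ lt x x.
Proof. by case: H. Qed.
Lemma og_trans (M : zmodType) (lt : M -> M -> Prop) (H : ordered_group lt) x y z :
  lt x y -> lt y z -> lt x z.
Proof. by case: H => _ T _ _; apply: T. Qed.
Lemma og_tot (M : zmodType) (lt : M -> M -> Prop) (H : ordered_group lt) x y :
  lt x y \/ x = y \/ lt y x.
Proof. by case: H. Qed.
Lemma og_addr (M : zmodType) (lt : M -> M -> Prop) (H : ordered_group lt) x y z :
  lt x y -> lt (x + z) (y + z).
Proof. by case: H => _ _ _ A; apply: A. Qed.
Lemma og_addl (M : zmodType) (lt : M -> M -> Prop) (H : ordered_group lt) x y z :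
  lt x y -> lt (z + x) (z + y).
Proof. by move=> h; rewrite ![z + _]addrC; apply: og_addr. Qed.
Lemma og_add2 (M : zmodType) (lt : M -> M -> Prop) (H : ordered_group lt) x y z w :
  lt x y -> lt z w -> lt (x + z) (y + w).
Proof. move=> h1 h2; apply: (og_trans H (og_addr H z h1)); exact: og_addl. Qed.
Lemma og_asym (M : zmodType) (lt : M -> M -> Prop) (H : ordered_group lt) x y :
  lt x y -> lt y x -> False.
Proof. move=> h1 h2; exact: (og_irr H (og_trans H h1 h2)). Qed.
Lemma og_cancr (M : zmodType) (lt : M -> M -> Prop) (H : ordered_group lt) x y z :
  lt (x + z) (y + z) -> lt x y.
Proof. move=> h; have := og_addr H (- z) h; by rewrite !addrK. Qed.
Lemma og_sub0 (M : zmodType) (lt : M -> M -> Prop) (H : ordered_group lt) x y :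
  lt x y <-> lt 0 (y - x).
Proof.
split=> h. by have := og_addr H (- x) h; rewrite subrr.
by have := og_addr H x h; rewrite add0r subrK.
Qed.
Lemma og_le_refl (M : zmodType) (lt : M -> M -> Prop) x : le lt x x.
Proof. by right. Qed.
Lemma og_le_lt (M : zmodType) (lt : M -> M -> Prop) (H : ordered_group lt) x y z :
  le lt x y -> lt y z -> lt x z.
Proof. by case=> [h|->] //; apply: og_trans. Qed.
Lemma og_lt_le (M : zmodType) (lt : M -> M -> Prop) (H : ordered_group lt) x y z :
  lt x y -> le lt y z -> lt x z.
Proof. by move=> h [h'|<-] //; apply: og_trans h h'. Qed.
Lemma og_le_trans (M : zmodType) (lt : M -> M -> Prop) (H : ordered_group lt) x y z :
  le lt x y -> le lt y z -> le lt x z.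
Proof. by case=> [h|->] //; move=> h'; left; apply: og_lt_le h h'. Qed.
Lemma og_nlt (M : zmodType) (lt : M -> M -> Prop) (H : ordered_group lt) x y :
  ~ lt x y -> le lt y x.
Proof. by case: (og_tot H x y) => [h|[->|h]] n; [case: n| right| left]. Qed.
Lemma og_le_nlt (M : zmodType) (lt : M -> M -> Prop) (H : ordered_group lt) x y :
  le lt x y -> ~ lt y x.
Proof. by move=> h1 h2; apply: (og_irr H (og_le_lt H h1 h2)). Qed.
Lemma og_le_add2 (M : zmodType) (lt : M -> M -> Prop) (H : ordered_group lt) x y z w :
  le lt x y -> le lt z w -> le lt (x + z) (y + w).
Proof.
case=> [h1|<-]; case=> [h2|<-]; try by right.
- by left; apply: og_add2.
- by left; apply: og_addr.
- by left; apply: og_addl.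
Qed.
Lemma og_lt_le_add (M : zmodType) (lt : M -> M -> Prop) (H : ordered_group lt) x y z w :
  lt x y -> le lt z w -> lt (x + z) (y + w).
Proof. by move=> h1 [h2|<-]; [apply: og_add2 | apply: og_addr]. Qed.

Lemma S_ext (M : zmodType) (S : nat -> (seq M -> Prop) -> Prop) n (P Q : seq M -> Prop) :
  S n P -> (forall s, P s <-> Q s) -> S n Q.
Proof.
move=> h e; have -> : Q = P; last by [].
by apply: functional_extensionality => s; apply: propositional_extensionality; rewrite e.
Qed.

Lemma S_inter (M : zmodType) lt (S : nat -> (seq M -> Prop) -> Prop) n (A B : seq M -> Prop) :
  is_structure lt S -> S n A -> S n B -> S n (fun s => A s /\ B s).
Proof.
case=> dim [_ U C] _ _ hA hB.
have h := C _ _ (U _ _ _ (C _ _ hA) (C _ _ hB)).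
apply: (S_ext h) => s; split.
- case=> sz H; have [a|na] := classic (A s); last by case: H; left.
  have [b|nb] := classic (B s); last by case: H; right.
  by [].
- case=> a b; split; first exact: dim _ _ hA _ a.
  by case=> [] [].
Qed.

Lemma S_double (M : zmodType) lt (S : nat -> (seq M -> Prop) -> Prop) :
  is_structure lt S -> S 1 (fun s => exists z, s = [:: z + z]).
Proof.
move=> HS; have HS' := HS; case: HS' => dim [_ _ _] [Pl Pr Dg Pj] [_ Ad _].
have A3 := S_inter HS Ad (Dg 3%N 0%N 1%N isT isT).
have A4 := S_inter HS (Pr _ _ A3) (Dg 4%N 0%N 3%N isT isT).
have P1 := Pj _ _ (Pj _ _ (Pj _ _ A4)).
apply: (S_ext P1) => s; split.
- case=> z1 [z2 [z3 [[sz [[x [y [e1 e2]]]]] [_ e3]]]].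
  move: sz e1 e2 e3; rewrite !size_rcons; case: s => [|w [|? ?]] //= _.
  case=> -> -> -> /= [_ ->] ->; by exists y.
- case=> z ->; exists z, z, (z + z) => /=.
  split; [split; first by [] | by []].
  split; last by [].
  by exists z, z.
Qed.

Lemma og_max2 (M : zmodType) (lt : M -> M -> Prop) (H : ordered_group lt) x y :
  exists m, le lt x m /\ le lt y m.
Proof.
case: (og_tot H x y) => [h|[->|h]].
- by exists y; split; [left|right].
- by exists y; split; right.
- by exists x; split; [right|left].
Qed.

Lemma og_bound (M : zmodType) (lt : M -> M -> Prop) (H : ordered_group lt) (T : Type)
  (P : T -> M -> Prop) (l : seq T) x0 :
  (forall t, exists B, forall m, P t m -> le lt m B) ->
  exists B, le lt x0 B /\ forall t m, List.In t l -> P t m -> le lt m B.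
Proof.
move=> hb; elim: l => [|t l [B [hB1 hB2]]].
- by exists x0; split; [right|].
- have [Bt hBt] := hb t; have [m [m1 m2]] := og_max2 H B Bt.
  exists m; split; first exact: og_le_trans hB1 m1.
  move=> t' m' [<-|hin] hp; first exact: og_le_trans (hBt _ hp) m2.
  exact: og_le_trans (hB2 _ _ hin hp) m1.
Qed.

Lemma og_gap (M : zmodType) (lt : M -> M -> Prop) (H : ordered_group lt) e q :
  lt 0 e -> (forall r, lt 0 r -> lt r e -> False) -> e = q + q -> False.
Proof.
move=> he gap heq.
case: (og_tot H q 0) => [h|[h|h]].
- have := og_add2 H h h; rewrite addr0 -heq => h2.
  exact: (@og_asym M lt H e 0 h2 he).
- by move: he; rewrite heq h addr0 => h0; exact: og_irr H _ h0.
- have hq : le lt e q by apply: (og_nlt H) => hl; exact: gap q h hl.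
  have := og_lt_le_add H h hq; rewrite add0r -heq => h0; exact: og_irr H _ h0.
Qed.

Lemma og_dense (M : zmodType) (lt : M -> M -> Prop) (S : nat -> (seq M -> Prop) -> Prop)
  (H : ordered_group lt) (HS : is_structure lt S) (Ho : o_minimal lt S) x y :
  lt x y -> exists z, lt x z /\ lt z y.
Proof.
move=> hxy; apply: NNPP => nz.
set e := y - x.
have he : lt 0 e by rewrite /e -og_sub0.
have gap : forall r, lt 0 r -> lt r e -> False.
  move=> r h1 h2; apply: nz; exists (x + r); split.
  - by have := og_addl H x h1; rewrite addr0.
  - by have := og_addl H x h2; rewrite /e [x + (y - x)]addrC subrK.
have [pts [ivs hiff]] := Ho _ (S_double HS).
have [B1 [hB10 hB1]] : exists B, le lt 0 B /\ forall t m, List.In t pts -> m = t -> le lt m B.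
  apply: (@og_bound M lt H M (fun t m => m = t) pts 0) => t; exists t => m ->; by right.
have [B [hB0 hB]] : exists B, le lt B1 B /\ forall (iv : option M * option M) m, List.In iv ivs ->
    iv.1 = Some m \/ iv.2 = Some m -> le lt m B.
  apply: (@og_bound M lt H _ (fun (iv : option M * option M) m => iv.1 = Some m \/ iv.2 = Some m) ivs B1) => -[[u|] [v|]] /=.
  - have [m [h1 h2]] := og_max2 H u v; exists m; by move=> m' [[<-]|[<-]].
  - exists u; by move=> m' [[<-]|//]; right.
  - exists v; by move=> m' [//|[<-]]; right.
  - exists 0; by move=> m' [|].
have hBpos : le lt 0 B := og_le_trans H hB10 hB0.
set z := B + e.
have hz0 : lt 0 z by have := og_lt_le_add H he hBpos; rewrite addr0 /z addrC.
have hBz : lt B (z + z).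
  apply: (@og_trans M lt H _ z).
    by have := og_addl H B he; rewrite addr0.
  by have := og_addl H z hz0; rewrite addr0.
have [hp|[iv [hiv [hl hr]]]] := proj1 (hiff (z + z)) (ex_intro _ z erefl).
  have h1 := og_le_trans H (hB1 _ _ hp erefl) hB0. have h2 := og_le_nlt H h1. exact: h2 hBz.
have hin : in_interval lt iv (z + z + e).
  split.
  - case: iv.1 hl => // u hu; apply: (og_trans H hu).
    by have := og_addl H (z + z) he; rewrite addr0.
  - case E: iv.2 hr => [v|] // hv.
    have := hB _ _ hiv (or_intror E) => hvB.
    exfalso; exact: (og_le_nlt H hvB (og_trans H hBz hv)).
have [w [hw]] := proj2 (hiff (z + z + e)) (or_intror (ex_intro _ iv (conj hiv hin))).
apply: (og_gap H he gap (q := w - z)).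
have -> : e = w + w - (z + z) by rewrite -hw addrC addKr.
by rewrite opprD addrACA.
Qed.

Lemma og_max2' (M : zmodType) (lt : M -> M -> Prop) (H : ordered_group lt) x y :
  exists m, [/\ le lt x m, le lt y m & m = x \/ m = y].
Proof.
case: (og_tot H x y) => [h|[->|h]].
- by exists y; split; [left|right|right].
- by exists y; split; [right|right|right].
- by exists x; split; [right|left|left].
Qed.

Lemma og_opp (M : zmodType) (lt : M -> M -> Prop) (H : ordered_group lt) x y :
  lt x y -> lt (- y) (- x).
Proof.
move=> h; have := og_addr H (- x - y) h.
by rewrite addrA subrr add0r addrCA subrr addr0.
Qed.

Lemma og_nle (M : zmodType) (lt : M -> M -> Prop) (H : ordered_group lt) x y :
  ~ le lt x y -> lt y x.
Proof. by case: (og_tot H x y) => [h|[h|h]] n //; case: n; [left|right]. Qed.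

Lemma alg1 (M : zmodType) (A B e g : M) : A + e - (B - (g - e)) = (A - B) + g.
Proof. by rewrite opprB addrA -(addrA A e) [e + _]addrC subrK addrAC. Qed.

Lemma lim_lower (M : zmodType) (lt : M -> M -> Prop) (S : nat -> (seq M -> Prop) -> Prop)
  (H : ordered_group lt) (HS : is_structure lt S) (Ho : o_minimal lt S)
  (a b c d : M) (hab : lt a b) (h : M -> M -> M)
  (hcont : continuous_on_box lt a b c d h) y1 y2 dl :
  le lt c y1 -> le lt y1 d -> le lt c y2 -> le lt y2 d ->
  (forall t0, lt t0 b -> exists t, [/\ lt t0 t, lt t b, lt a t & le lt dl (h t y2 - h t y1)]) ->
  le lt dl (h b y2 - h b y1).
Proof.
move=> c1 d1 c2 d2 hf; apply: NNPP => /(og_nle H) hE.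
set E := h b y2 - h b y1 in hE.
set g := dl - E.
have hg : lt 0 g by rewrite /g -og_sub0.
have [e [e0 eg]] := og_dense H HS Ho hg.
have hge : lt 0 (g - e) by rewrite -og_sub0.
have bx1 : in_box lt a b c d b y1 by split; [left|split; [right|split]].
have bx2 : in_box lt a b c d b y2 by split; [left|split; [right|split]].
have l1 : lt (h b y1 - (g - e)) (h b y1).
  by have := og_addl H (h b y1) (og_opp H hge); rewrite oppr0 addr0.
have r1 : lt (h b y1) (h b y1 + e).
  by have := og_addl H (h b y1) e0; rewrite addr0.
have l2 : lt (h b y2 - e) (h b y2).
  by have := og_addl H (h b y2) (og_opp H e0); rewrite oppr0 addr0.
have r2 : lt (h b y2) (h b y2 + e).
  by have := og_addl H (h b y2) e0; rewrite addr0.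
have [u1 [v1 [u2 [v2 [hu1 hv1 hu2 hv2 hN1]]]]] := hcont _ _ bx1 _ _ l1 r1.
have [u1' [v1' [u2' [v2' [hu1' hv1' hu2' hv2' hN2]]]]] := hcont _ _ bx2 _ _ l2 r2.
have [m [m1 m2 mb]] := og_max2' H u1 u1'.
have hmb : lt m b by case: mb => ->.
have [t [ht0 htb hat hd]] := hf m hmb.
have bt1 : in_box lt a b c d t y1 by split; [left|split; [left|split]].
have bt2 : in_box lt a b c d t y2 by split; [left|split; [left|split]].
have [p1 _] := hN1 _ _ bt1 (og_le_lt H m1 ht0) (og_trans H htb hv1) hu2 hv2.
have [_ p2] := hN2 _ _ bt2 (og_le_lt H m2 ht0) (og_trans H htb hv1') hu2' hv2'.
have := og_add2 H p2 (og_opp H p1).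
have -> : h b y2 + e - (h b y1 - (g - e)) = dl.
  by rewrite alg1 /g /E addrC subrK.
move=> hh. exact (og_le_nlt H hd hh).
Qed.

Definition ev (M : zmodType) (lt : M -> M -> Prop) (b : M) (Q : M -> Prop) :=
  exists t0, lt t0 b /\ forall t, lt t0 t -> lt t b -> Q t.

Lemma ev_and (M : zmodType) (lt : M -> M -> Prop) (H : ordered_group lt) b Q1 Q2 :
  ev lt b Q1 -> ev lt b Q2 -> ev lt b (fun t => Q1 t /\ Q2 t).
Proof.
move=> [t1 [h1 q1]] [t2 [h2 q2]].
have [m [m1 m2 mb]] := og_max2' H t1 t2.
exists m; split; first by case: mb => ->.
move=> t hmt htb; split.
- exact: q1 (og_le_lt H m1 hmt) htb.
- exact: q2 (og_le_lt H m2 hmt) htb.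
Qed.

Lemma ev_fin (M : zmodType) (lt : M -> M -> Prop) (H : ordered_group lt) b x0 (P : nat)
  (Q : nat -> M -> Prop) :
  lt x0 b -> (forall p, (p < P)%N -> ev lt b (Q p)) ->
  ev lt b (fun t => forall p, (p < P)%N -> Q p t).
Proof.
move=> hx0; elim: P => [|P IH] hQ.
  by exists x0; split => // t _ _ p.
have [t0 [h0 q0]] := ev_and H (IH (fun p hp => hQ p (ltnW hp))) (hQ P (ltnSn P)).
exists t0; split => // t ht htb p; rewrite ltnS leq_eqVlt => /orP [/eqP ->|hp].
- by case: (q0 t ht htb).
- by case: (q0 t ht htb) => A _; apply: A.
Qed.

Lemma ev_ex (M : zmodType) (lt : M -> M -> Prop) S (H : ordered_group lt)
  (HS : is_structure lt S) (Ho : o_minimal lt S) b Q :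
  ev lt b Q -> exists t, lt t b /\ Q t.
Proof.
move=> [t0 [h0 q]]; have [t [h1 h2]] := og_dense H HS Ho h0.
by exists t; split => //; apply: q.
Qed.

Lemma freq_all (M : zmodType) (lt : M -> M -> Prop) S (H : ordered_group lt)
  (HS : is_structure lt S) (Ho : o_minimal lt S) a b (P : M -> Prop) :
  lt a b -> (forall t, lt a t -> lt t b -> P t) ->
  forall t0, lt t0 b -> exists t, [/\ lt t0 t, lt t b, lt a t & P t].
Proof.
move=> hab hP t0 h0.
have [m [m1 m2 mb]] := og_max2' H t0 a.
have hmb : lt m b by case: mb => ->.
have [t [h1 h2]] := og_dense H HS Ho hmb.
have hat : lt a t := og_le_lt H m2 h1.
by exists t; split => //; [exact (og_le_lt H m1 h1) | apply: hP].
Qed.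

Lemma php (n m : nat) (R : nat -> nat -> Prop) :
  (n < m)%N -> (forall i, (i < m)%N -> exists k, (k < n)%N /\ R i k) ->
  exists i j k, [/\ (i < m)%N, (j < m)%N, i <> j, (k < n)%N & R i k /\ R j k].
Proof.
move=> hnm hR.
pose col (i : 'I_m) : 'I_n :=
  let s := constructive_indefinite_description _ (hR i (ltn_ord i)) in
  Ordinal (proj1 (proj2_sig s)).
have colR : forall i : 'I_m, R i (col i).
  by move=> i; rewrite /col /=; case: (constructive_indefinite_description _ _) => k [].
have ninj : ~ injective col.
  move=> inj; have := @leq_card _ _ col inj; rewrite !card_ord => hle.
  by move: (leq_ltn_trans hle hnm); rewrite ltnn.
apply: NNPP => hn; apply: ninj => x y hxy.
apply: NNPP => hne; apply: hn; exists x, y, (col x); split => //.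
- by move=> e; apply: hne; apply: val_inj.
- by split; [|rewrite hxy].
Qed.

Lemma heights (M : zmodType) (lt : M -> M -> Prop) S (H : ordered_group lt)
  (HS : is_structure lt S) (Ho : o_minimal lt S) d n :
  forall u, lt u d -> exists l : seq M, [/\ size l = n, uniq l &
    forall y, y \in l -> lt u y /\ lt y d].
Proof.
elim: n => [|n IH] u hu; first by exists [::].
have [z [z1 z2]] := og_dense H HS Ho hu.
have [l [sl ul hl]] := IH z z2.
exists (z :: l); split => /=; first by rewrite sl.
- rewrite ul andbT; apply/negP => hz; have [hzz _] := hl z hz.
  exact (og_irr H hzz).
- move=> y; rewrite in_cons => /orP [/eqP ->|hy]; first by [].
  have [h1 h2] := hl y hy; split => //; exact (og_trans H z1 h1).
Qed.

Lemma In_nth_ex (T : Type) (d : T) (l : seq T) x :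
  List.In x l -> exists k, (k < size l)%N /\ nth d l k = x.
Proof.
elim: l => [|y l IH] //= [->|hin]; first by exists 0%N.
by have [k [hk <-]] := IH hin; exists k.+1.
Qed.

Lemma seq_nth_In (T : Type) (d : T) (l : seq T) k :
  (k < size l)%N -> List.In (nth d l k) l.
Proof.
elim: l k => [|y l IH] [|k] //= hk; first by left.
by right; apply: IH.
Qed.

Lemma tele (M : zmodType) (x y z : M) : x - y + (y - z) = x - z.
Proof. by rewrite addrA subrK. Qed.

Lemma core (M : zmodType) (lt : M -> M -> Prop) (S : nat -> (seq M -> Prop) -> Prop)
  (H : ordered_group lt) (HS : is_structure lt S) (Ho : o_minimal lt S)
  (a b c d : M) (hab : lt a b) (hcd : lt c d) (h : M -> M -> M)
  (hcont : continuous_on_box lt a b c d h)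
  (hincr : forall t, lt a t -> lt t b ->
     forall y1 y2, le lt c y1 -> le lt y2 d -> lt y1 y2 -> lt (h t y1) (h t y2))
  (C : seq M -> Prop) (hC : affine_on C (fun s => h s`_0 s`_1)) yl yh :
  lt yl yh -> lt c yl -> lt yh d ->
  (forall t0, lt t0 b -> exists t, [/\ lt t0 t, lt t b, lt a t & C [:: t; yl] /\ C [:: t; yh]]) ->
  lt 0 (h b d - h b c).
Proof.
move=> hlh hcl hhd freq.
have [ts [_ htsb hats [Cl Ch]]] := freq a hab.
set dl := h ts yh - h ts yl.
have hdl : lt 0 dl.
  by rewrite /dl -(og_sub0 H); apply: (hincr) => //; left.
have hv : forall t, Defs.addv [:: t; yl] [:: 0; yh - yl] = [:: t; yh].
  by move=> t; rewrite /Defs.addv /= addr0 [yl + _]addrC subrK.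
have hD : forall t, C [:: t; yl] -> C [:: t; yh] -> h t yh - h t yl = dl.
  move=> t c1 c2; have := hC [:: t; yl] [:: ts; yl] [:: 0; yh - yl] c1 Cl.
  by rewrite !hv => /(_ c2 Ch).
have hcyl : le lt c yl by left.
have hyld : le lt yl d by left; exact (og_trans H hlh hhd).
have hcyh : le lt c yh by left; exact (og_trans H hcl hlh).
have hyhd : le lt yh d by left.
have hcc : le lt c c by right.
have hdd : le lt d d by right.
have X2 : le lt dl (h b yh - h b yl).
  apply: (lim_lower H HS Ho hab hcont hcyl hyld hcyh hyhd) => t0 h0.
  have [t [t1 t2 t3 [c1 c2]]] := freq t0 h0.
  by exists t; split => //; right; rewrite hD.
have X1 : le lt 0 (h b yl - h b c).
  apply: (lim_lower H HS Ho hab hcont hcc (or_introl hcd) hcyl hyld).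
  apply: (freq_all H HS Ho hab) => t ha hb'; left; rewrite -(og_sub0 H).
  by apply: (hincr).
have X3 : le lt 0 (h b d - h b yh).
  apply: (lim_lower H HS Ho hab hcont hcyh hyhd (or_introl hcd) hdd).
  apply: (freq_all H HS Ho hab) => t ha hb'; left; rewrite -(og_sub0 H).
  by apply: (hincr).
rewrite -(tele (h b d) (h b yh) (h b c)) -(tele (h b yh) (h b yl) (h b c)) addrA.
have h2 : lt 0 (h b yh - h b yl) := og_lt_le H hdl X2.
have := og_lt_le_add H (og_lt_le_add H h2 X1) X3.
by rewrite !add0r [_ + (h b d - _)]addrC addrA.
Qed.
Unset Implicit Arguments. Set Strict Implicit.

Theorem mainTheorem2 (M : zmodType) (lt : M -> M -> Prop)
  (S : nat -> (seq M -> Prop) -> Prop)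
  (Hgrp : ordered_group lt) (HS : is_structure lt S)
  (Homin : o_minimal lt S) (Hlin : linear_structure S)
  (a b c d : M) (hab : lt a b) (hcd : lt c d) (h : M -> M -> M)
  (hdef : definable_on_box lt S a b c d h)
  (hcont : continuous_on_box lt a b c d h)
  (hincr : forall t, lt a t -> lt t b ->
     forall y1 y2, le lt c y1 -> le lt y2 d -> lt y1 y2 -> lt (h t y1) (h t y2)) :
  lt 0 (h b d - h b c).
Proof.
pose B2 := fun s : seq M => exists x y, s = [:: x; y] /\ in_box lt a b c d x y.
pose f := fun s : seq M => h s`_0 s`_1.
have SB : S 2%N B2.
  have HS' := HS; case: HS' => _ _ [_ _ _ Pj] _.
  apply: (S_ext (Pj _ _ hdef)) => s; split.
  - case=> z [x [y [e hb]]].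
    have e' : rcons s z = rcons [:: x; y] (h x y) by rewrite e.
    case: (rcons_inj e') => -> _; by exists x, y.
  - case=> x [y [-> hb]]; exists (h x y), x, y; by split.
have Df : definable_fun S 2 B2 f.
  split => //; apply: (S_ext hdef) => s; split.
  - case=> x [y [-> hb]]; exists [:: x; y]; split => //; by exists x, y.
  - case=> x0 [[x [y [-> hb]]] ->]; exists x, y; by split.
have [Bs [hBsS hcov _ haff]] := Hlin 2%N B2 f Df.
set N := size Bs.
have [ys [sys uys hys]] := heights Hgrp HS Homin N.+1 hcd.
pose Ck := fun k => nth (fun _ : seq M => False) Bs k.
pose yi := fun i => nth 0 ys i.
have [i [j [k [hi hj hij hk hfr]]]] : exists i j k, [/\ (i < N.+1)%N, (j < N.+1)%N, i <> j,
   (k < N)%N & forall t0, lt t0 b -> exists t, [/\ lt t0 t, lt t b, lt a t &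
     Ck k [:: t; yi i] /\ Ck k [:: t; yi j]]].
  apply: NNPP => hn.
  have hev : ev lt b (fun t => forall i, (i < N.+1)%N -> forall j, (j < N.+1)%N ->
      forall k, (k < N)%N -> ~ (lt a t /\ i <> j /\ Ck k [:: t; yi i] /\ Ck k [:: t; yi j])).
    apply: (ev_fin Hgrp hab) => i hi; apply: (ev_fin Hgrp hab) => j hj.
    apply: (ev_fin Hgrp hab) => k hk.
    case: (classic (i = j)) => [eij|nij].
      by exists a; split => // t _ _ [_ [hh _]].
    apply: NNPP => hne; apply: hn; exists i, j, k; split => // t0 h0.
    apply: NNPP => hne2; apply: hne; exists t0; split => // t ht htb [hat [_ [c1 c2]]].
    by apply: hne2; exists t; split.
  have hev2 := ev_and Hgrp hev (ex_intro _ a (conj hab (fun t h _ => h))).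
  have [t [htb [hall hat]]] := ev_ex Hgrp HS Homin hev2.
  have hR : forall i, (i < N.+1)%N -> exists k, (k < N)%N /\ Ck k [:: t; yi i].
    move=> i hi.
    have hin : yi i \in ys by apply: mem_nth; rewrite sys.
    have [hy1 hy2] := hys _ hin.
    have hB : B2 [:: t; yi i].
      exists t, (yi i); split => //; split; [left|split; [left|split; left]] => //.
    have [C [hC1 hC2]] := proj1 (hcov _) hB.
    have [k [hk hkC]] := In_nth_ex (fun _ : seq M => False) hC1.
    by exists k; split => //; rewrite /Ck hkC.
  have [i [j [k [hi hj hij hk [c1 c2]]]]] := php (ltnSn N) hR.
  by apply: (hall i hi j hj k hk).
have hyin : forall i, (i < N.+1)%N -> lt c (yi i) /\ lt (yi i) d.
  by move=> i0 hi0; apply: hys; apply: mem_nth; rewrite sys.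
have hC : affine_on (Ck k) f by apply: haff; apply: seq_nth_In.
have [ci di] := hyin i hi.
have [cj dj] := hyin j hj.
have hne : yi i <> yi j.
  move=> e; apply: hij; apply/eqP.
  by rewrite -(nth_uniq 0 _ _ uys) ?sys //; apply/eqP.
case: (og_tot Hgrp (yi i) (yi j)) => [l|[e|l]].
- exact (core Hgrp HS Homin hab hcd hcont hincr hC l ci dj hfr).
- by case: hne.
- apply: (core Hgrp HS Homin hab hcd hcont hincr hC l cj di) => t0 h0.
  have [t [t1 t2 t3 [c1 c2]]] := hfr t0 h0.
  by exists t; split.
Qed.
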